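(* If $S\subseteq\mathbb N^d$ is a PI-monoid, then $m(S)\in S\setminus\{0\}$. In particular, $m(S)=\min_{\preceq_{\mathbb N^d}}(S\setminus\{0\})$.
   Context: $\preceq_{\mathbb N^d}$ is the componentwise partial order on $\mathbb N^d$. For a submonoid $S$ of $\mathbb N^d$, its multiplicity is $m(S)=\inf_{\preceq_{\mathbb N^d}}(S\setminus\{0\})$. A submonoid $S$ of $\mathbb N^d$ is a PI-monoid if there exist a submonoid $T$ of $\mathbb N^d$ and $\mathbf a\in T\setminus\{0\}$ with $S=(\mathbf a+T)\cup\{0\}$. *)

(* Defs.v *)
From mathcomp Require Import all_boot.
Set Implicit Arguments. Unset Strict Implicit. Unset Printing Implicit Defensive.

Definition vec (d : nat) := {ffun 'I_d -> nat}.

Definition vzero (d : nat) : vec d := [ffun => 0%N].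
Definition vadd (d : nat) (x y : vec d) : vec d := [ffun i => x i + y i].

Definition vle (d : nat) (x y : vec d) : Prop := forall i : 'I_d, x i <= y i.

Definition is_submonoid (d : nat) (S : vec d -> Prop) : Prop :=
  S (vzero d) /\ forall x y, S x -> S y -> S (vadd x y).

Definition nonzero_part (d : nat) (S : vec d -> Prop) : vec d -> Prop :=
  fun x => S x /\ x <> vzero d.

Definition is_inf (d : nat) (A : vec d -> Prop) (m : vec d) : Prop :=
  (forall x, A x -> vle m x) /\
  (forall l, (forall x, A x -> vle l x) -> vle l m).

Definition is_min (d : nat) (A : vec d -> Prop) (m : vec d) : Prop :=
  A m /\ forall x, A x -> vle m x.

Definition PI_monoid (d : nat) (S : vec d -> Prop) : Prop :=
  is_submonoid S /\
  exists (T : vec d -> Prop) (a : vec d),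
    is_submonoid T /\ T a /\ a <> vzero d /\
    forall x, S x <-> (x = vzero d \/ exists t, T t /\ x = vadd a t).

(* Main.v *)
Require Import Defs.
From mathcomp Require Import all_boot.

Theorem lemma5p4 (d : nat) (S : vec d -> Prop) :
  PI_monoid S ->
  (exists m, is_inf (nonzero_part S) m) /\
  (forall m, is_inf (nonzero_part S) m ->
     nonzero_part S m /\ is_min (nonzero_part S) m).
Proof.
move=> [_ [T [a [[T0 _] [Ta [anz HS]]]]]].
have aS : nonzero_part S a.
  split=> //; apply/HS; right; exists (vzero d); split=> //.
  by apply/ffunP=> i; rewrite !ffunE addn0.
have alow : forall x, nonzero_part S x -> vle a x.
  move=> x [/HS [-> //|[t [_ ->]]] _] i.
  by rewrite ffunE leq_addr.
have ainf : is_inf (nonzero_part S) a.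
  by split=> // l Hl; apply: Hl.
split; first by exists a.
move=> m [Hlow Hgr].
have -> : m = a.
  apply/ffunP=> i; apply/eqP; rewrite eqn_leq.
  by rewrite (Hlow a aS i) (Hgr a alow i).
by split=> //; split.
Qed.
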